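(* Let $\mathbf A\in\mathcal V_n$, let $X_k$ be the set of homomorphisms $\mathbf A\to\mathbf M_k$ for $k\in[0,n]$, and let $Y=\bigcup_{k\in[0,n]}X_k\times\Omega_k$. Define $\preccurlyeq$ on $Y$ by: for $(x,\omega_1)\in X_j\times\Omega_j$ and $(y,\omega_2)\in X_k\times\Omega_k$, $(x,\omega_1)\preccurlyeq(y,\omega_2)$ iff there is $R\in\mathcal R_{\omega_1\omega_2}$ with $(x(a),y(a))\in R$ for all $a\in A$. The relation $\preccurlyeq$, which is a quasi-order on $Y$, is antisymmetric; hence $\preccurlyeq$ is a partial order on $Y$.
   Context: Fix an integer $n\ge1$; $[m,p]=\{i\in\mathbb Z:m\le i\le p\}$. Algebras have signature $(\otimes,\oplus,\wedge,\vee,\neg,\top,\mathbf f_0,\dots,\mathbf f_n,\mathbf t_0,\dots,\mathbf t_n,\bot)$. $\mathbf M_0$ has universe $\{\top^0,\mathbf f^0,\mathbf t^0,\bot^0\}$, knowledge order $\bot^0<\mathbf f^0,\mathbf t^0<\top^0$ ($\mathbf f^0,\mathbf t^0$ incomparable), truth order $\mathbf f^0<\top^0,\bot^0<\mathbf t^0$ ($\top^0,\bot^0$ incomparable); $\otimes,\oplus$ are meet/join in the knowledge order, $\wedge,\vee$ meet/join in the truth order; $\neg$ swaps $\mathbf f^0,\mathbf t^0$ and fixes $\top^0,\bot^0$; $\top,\bot$ name $\top^0,\bot^0$, all $\mathbf f_i$ name $\mathbf f^0$, all $\mathbf t_i$ name $\mathbf t^0$. For $k\in[1,n]$, $\mathbf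 M_k$ has universe $\{\top^k,\bot^k,\mathbf f^k,\mathbf t^k,\mathbf 0^k,\mathbf 1^k\}$, knowledge order generated by $\bot^k<\mathbf f^k<\mathbf 0^k<\top^k$, $\bot^k<\mathbf t^k<\mathbf 1^k<\top^k$, truth order generated by $\mathbf 0^k<\mathbf f^k<\top^k<\mathbf t^k<\mathbf 1^k$, $\mathbf f^k<\bot^k<\mathbf t^k$; operations as for $\mathbf M_0$; $\neg$ swaps $\mathbf f^k\leftrightarrow\mathbf t^k$, $\mathbf 0^k\leftrightarrow\mathbf 1^k$, fixes $\top^k,\bot^k$; $\top,\bot$ name $\top^k,\bot^k$; $\mathbf f_i$ names $\mathbf 0^k$ if $i<k$ and $\mathbf f^k$ if $i\ge k$; $\mathbf t_i$ names $\mathbf 1^k$ if $i<k$ and $\mathbf t^k$ if $i\ge k$. $\mathcal V_n$ is the class of algebras isomorphic to subalgebras of products of copies of $\mathbf M_0,\dots,\mathbf M_n$. Carriers: $\delta_0,\gamma_0\colon M_0\to\{0,1\}$ with $\delta_0^{-1}(1)=\{\bot^0,\mathbf t^0\}$, $\gamma_0^{-1}(1)=\{\top^0,\mathbf t^0\}$; for $k\in[1,n]$, $\gamma_k,\delta_k\colon M_k\to\{0,1\}$ with $\gamma_k^{-1}(1)=\{\mathbf 1^k\}$, $\delta_k^{-1}(1)=\{\mathbf f^k,\bot^k,\top^k,\mathbf t^k,\mathbf 1^k\}$; $\Omega_k=\{\gamma_k,\delta_k\}$. For $\omega_1\in\Omega_j$, $\omega_2\in\Omega_k$, $\mathcal R_{\omega_1\omega_2}$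 is the (possibly empty) set of subuniverses of $\mathbf M_j\times\mathbf M_k$ maximal with respect to being contained in $\{(a,b)\in M_j\times M_k\mid\omega_1(a)\le\omega_2(b)\}$. That $\preccurlyeq$ is reflexive and transitive is known (from a general piggyback-duality result) and may be taken as given. *)

(* Defs.v *)
From mathcomp Require Import all_boot.
Set Implicit Arguments. Unset Strict Implicit. Unset Printing Implicit Defensive.

Record alg (n : nat) := Alg {
  car : Type;
  a_otimes : car -> car -> car;
  a_oplus : car -> car -> car;
  a_wedge : car -> car -> car;
  a_vee : car -> car -> car;
  a_neg : car -> car;
  a_top : car;
  a_f : 'I_n.+1 -> car;
  a_t : 'I_n.+1 -> car;
  a_bot : car }.

Definition is_hom n (A B : alg n) (h : car A -> car B) : Prop :=
  (forall a b, h (a_otimes a b) = a_otimes (h a) (h b)) /\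
  (forall a b, h (a_oplus a b) = a_oplus (h a) (h b)) /\
  (forall a b, h (a_wedge a b) = a_wedge (h a) (h b)) /\
  (forall a b, h (a_vee a b) = a_vee (h a) (h b)) /\
  (forall a, h (a_neg a) = a_neg (h a)) /\
  h (a_top A) = a_top B /\
  (forall i, h (a_f A i) = a_f B i) /\ (forall i, h (a_t A i) = a_t B i) /\
  h (a_bot A) = a_bot B.

Definition subuniverse n (A : alg n) (S : car A -> Prop) : Prop :=
  (forall a b, S a -> S b -> S (a_otimes a b)) /\
  (forall a b, S a -> S b -> S (a_oplus a b)) /\
  (forall a b, S a -> S b -> S (a_wedge a b)) /\
  (forall a b, S a -> S b -> S (a_vee a b)) /\
  (forall a, S a -> S (a_neg a)) /\
  S (a_top A) /\
  (forall i, S (a_f A i)) /\ (forall i, S (a_t A i)) /\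
  S (a_bot A).

Definition prod_alg n (I : Type) (F : I -> alg n) : alg n :=
  @Alg n (forall i, car (F i))
    (fun a b i => a_otimes (a i) (b i))
    (fun a b i => a_oplus (a i) (b i))
    (fun a b i => a_wedge (a i) (b i))
    (fun a b i => a_vee (a i) (b i))
    (fun a i => a_neg (a i))
    (fun i => a_top (F i))
    (fun j i => a_f (F i) j)
    (fun j i => a_t (F i) j)
    (fun i => a_bot (F i)).

Definition prod2 n (A B : alg n) : alg n :=
  @Alg n (car A * car B)%type
    (fun a b => (a_otimes a.1 b.1, a_otimes a.2 b.2))
    (fun a b => (a_oplus a.1 b.1, a_oplus a.2 b.2))
    (fun a b => (a_wedge a.1 b.1, a_wedge a.2 b.2))
    (fun a b => (a_vee a.1 b.1, a_vee a.2 b.2))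
    (fun a => (a_neg a.1, a_neg a.2))
    (a_top A, a_top B)
    (fun j => (a_f A j, a_f B j))
    (fun j => (a_t A j, a_t B j))
    (a_bot A, a_bot B).

Definition glb (T : Type) (s : seq T) (le : T -> T -> bool) (x y : T) : T :=
  head x [seq z <- s | [&& le z x, le z y &
            all (fun w => (le w x && le w y) ==> le w z) s]].
Definition lub (T : Type) (s : seq T) (le : T -> T -> bool) (x y : T) : T :=
  glb s (fun a b => le b a) x y.

Inductive e4 := Top0 | Bot0 | F0 | T0.
Definition enum4 := [:: Top0; Bot0; F0; T0].
Definition k0le (x y : e4) : bool :=
  match x, y with
  | Bot0, _ => true | _, Top0 => true | F0, F0 => true | T0, T0 => true
  | _, _ => false end.
Definition t0le (x y : e4) : bool :=
  match x, y with
  | F0, _ => true | _, T0 => true | Top0, Top0 => true | Bot0, Bot0 => true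
  | _, _ => false end.
Definition neg0 (x : e4) : e4 :=
  match x with F0 => T0 | T0 => F0 | x => x end.

Definition M0 (n : nat) : alg n :=
  @Alg n e4 (glb enum4 k0le) (lub enum4 k0le) (glb enum4 t0le) (lub enum4 t0le)
    neg0 Top0 (fun _ => F0) (fun _ => T0) Bot0.

Inductive e6 := TopK | BotK | FK | TK | ZeroK | OneK.
Definition enum6 := [:: TopK; BotK; FK; TK; ZeroK; OneK].
(* knowledge order: reflexive-transitive closure of
   bot < f < 0 < top, bot < t < 1 < top *)
Definition kkle (x y : e6) : bool :=
  match x, y with
  | BotK, _ => true | _, TopK => true
  | FK, FK | FK, ZeroK | ZeroK, ZeroK => true
  | TK, TK | TK, OneK | OneK, OneK => true
  | _, _ => false end.
(* truth order: reflexive-transitive closure of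
   0 < f < top < t < 1, f < bot < t *)
Definition tkle (x y : e6) : bool :=
  match x, y with
  | ZeroK, _ => true | _, OneK => true
  | FK, FK | FK, TopK | FK, BotK | FK, TK => true
  | TopK, TopK | TopK, TK | BotK, BotK | BotK, TK | TK, TK => true
  | _, _ => false end.
Definition negk (x : e6) : e6 :=
  match x with FK => TK | TK => FK | ZeroK => OneK | OneK => ZeroK | x => x end.

Definition Mk (n k : nat) : alg n :=
  @Alg n e6 (glb enum6 kkle) (lub enum6 kkle) (glb enum6 tkle) (lub enum6 tkle)
    negk TopK
    (fun i => if (i < k)%N then ZeroK else FK)
    (fun i => if (i < k)%N then OneK else TK)
    BotK.

Definition Malg (n k : nat) : alg n :=
  match k with 0 => M0 n | S _ => Mk n k end.

(* A is isomorphic to a subalgebra of a product of copies of M_0,...,M_n,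
   i.e. A embeds (injective homomorphism) into such a product. *)
Definition in_Vn n (A : alg n) : Prop :=
  exists (I : Type) (c : I -> 'I_n.+1)
         (h : car A -> car (prod_alg (fun i => Malg n (c i)))),
    is_hom h /\ injective h.

Inductive om := Gam | Del.

Definition gamma0 (x : e4) : bool := match x with Top0 | T0 => true | _ => false end.
Definition delta0 (x : e4) : bool := match x with Bot0 | T0 => true | _ => false end.
Definition gammak (x : e6) : bool := match x with OneK => true | _ => false end.
Definition deltak (x : e6) : bool := match x with ZeroK => false | _ => true end.

Definition omega (n k : nat) (w : om) : car (Malg n k) -> bool :=
  match k return car (Malg n k) -> bool with
  | 0 => match w with Gam => gamma0 | Del => delta0 end
  | S _ => match w with Gam => gammak | Del => deltak end
  end.

Definition RR (n j k : nat) (w1 w2 : om)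
    (R : car (Malg n j) -> car (Malg n k) -> Prop) : Prop :=
  [/\ subuniverse (A := prod2 (Malg n j) (Malg n k)) (fun p => R p.1 p.2),
      (forall a b, R a b -> (omega w1 a <= omega w2 b)%N)
    & (forall R' : car (Malg n j) -> car (Malg n k) -> Prop,
        subuniverse (A := prod2 (Malg n j) (Malg n k)) (fun p => R' p.1 p.2) ->
        (forall a b, R' a b -> (omega w1 a <= omega w2 b)%N) ->
        (forall a b, R a b -> R' a b) ->
        (forall a b, R' a b -> R a b))].

(* raw elements: an index k in [0,n], a map A -> M_k and a label for
   gamma_k / delta_k; membership in Y requires the map to be a homomorphism *)
Definition Y n (A : alg n) : Type :=
  {k : 'I_n.+1 & ((car A -> car (Malg n k)) * om)%type}.

Definition inY n (A : alg n) (p : Y A) : Prop := is_hom (projT2 p).1.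

Definition preceq n (A : alg n) (p q : Y A) : Prop :=
  exists R, @RR n (projT1 p) (projT1 q) (projT2 p).2 (projT2 q).2 R /\
            forall a, R ((projT2 p).1 a) ((projT2 q).1 a).

(* Main.v *)
Require Import Defs.
From mathcomp Require Import all_boot.
From Stdlib Require Import FunctionalExtensionality.
Definition omk (w : om) : e6 -> bool := match w with Gam => gammak | Del => deltak end.
Definition om0 (w : om) : e4 -> bool := match w with Gam => gamma0 | Del => delta0 end.
Lemma sep0 w u v : om0 w u = om0 w v -> om0 w (neg0 u) = om0 w (neg0 v) -> u = v.
Proof. by case: w; case: u; case: v. Qed.
Lemma sepk w u v : omk w u = omk w v -> omk w (negk u) = omk w (negk v) ->
  omk w (glb enum6 kkle u OneK) = omk w (glb enum6 kkle v OneK) ->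
  omk w (glb enum6 kkle u ZeroK) = omk w (glb enum6 kkle v ZeroK) ->
  omk w (lub enum6 kkle u OneK) = omk w (lub enum6 kkle v OneK) ->
  omk w (lub enum6 kkle u ZeroK) = omk w (lub enum6 kkle v ZeroK) ->
  omk w (negk (lub enum6 kkle u OneK)) = omk w (negk (lub enum6 kkle v OneK)) ->
  omk w (negk (lub enum6 kkle u ZeroK)) = omk w (negk (lub enum6 kkle v ZeroK)) ->
  omk w (negk (glb enum6 kkle u OneK)) = omk w (negk (glb enum6 kkle v OneK)) ->
  omk w (negk (glb enum6 kkle u ZeroK)) = omk w (negk (glb enum6 kkle v ZeroK)) ->
  u = v.
Proof. by case: w; case: u; case: v. Qed.
Theorem lemma7p6 (n : nat) (hn : (1 <= n)%N) (A : alg n) (hA : in_Vn A)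
  (p q : Y A) :
  inY p -> inY q -> preceq p q -> preceq q p -> p = q.
Proof.
case: p => j [x w1]; case: q => k [y w2].
rewrite /inY /preceq /=.
move=> hx hy [R [[sR oR _] HR]] [R' [[sR' oR' _] HR']].
have E : forall a, omega w1 (x a) = omega w2 (y a).
  move=> a; have := oR _ _ (HR a); have := oR' _ _ (HR' a).
  by case: (omega w1 _); case: (omega w2 _).
clear R R' sR oR HR sR' oR' HR'.
case: hx => [xo [xp [xw [xv [xn [xtop [xf [xt xb]]]]]]]].
case: hy => [yo [yp [yw [yv [yn [ytop [yf [yt yb]]]]]]]].
destruct j as [[|j'] Hj]; destruct k as [[|k'] Hk].
- have e := bool_irrelevance Hk Hj; subst Hk.
  have ew : w1 = w2.
    by have := E (a_top A); rewrite xtop ytop; destruct w1, w2.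
  subst w2.
  have -> : x = y; last by [].
  apply: functional_extensionality => a.
  apply: (@sep0 w1).
  + exact: E.
  + by have := E (a_neg a); rewrite xn yn.
- exfalso.
  have := E (a_f A ord_max); rewrite xf yf /=.
  have := E (a_t A ord_max); rewrite xt yt /=.
  have -> : (n < k'.+1)%N = false by rewrite ltnNge -ltnS ?Hk ?Hj.
  by destruct w1, w2.
- exfalso.
  have := E (a_f A ord_max); rewrite xf yf /=.
  have := E (a_t A ord_max); rewrite xt yt /=.
  have -> : (n < j'.+1)%N = false by rewrite ltnNge -ltnS ?Hk ?Hj.
  by destruct w1, w2.
- have ejk : j' = k'.
    case: (ltngtP j' k') => // h; exfalso.
    + have := E (a_f A (Ordinal Hj)); rewrite xf yf /= ltnn ltnS h.
      have := E (a_t A (Ordinal Hj)); rewrite xt yt /= ltnn ltnS h.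
      by destruct w1, w2.
    + have := E (a_f A (Ordinal Hk)); rewrite xf yf /= ltnn ltnS h.
      have := E (a_t A (Ordinal Hk)); rewrite xt yt /= ltnn ltnS h.
      by destruct w1, w2.
  subst k'.
  have e := bool_irrelevance Hk Hj; subst Hk.
  have ew : w1 = w2.
    by have := E (a_top A); rewrite xtop ytop; destruct w1, w2.
  subst w2.
  have -> : x = y; last by [].
  apply: functional_extensionality => a.
  have xz : x (a_f A ord0) = ZeroK by rewrite xf.
  have yz : y (a_f A ord0) = ZeroK by rewrite yf.
  have xO : x (a_t A ord0) = OneK by rewrite xt.
  have yO : y (a_t A ord0) = OneK by rewrite yt.
  apply: (@sepk w1).
  + exact: E.
  + by have := E (a_neg a); rewrite xn yn.
  + by have := E (a_otimes a (a_t A ord0)); rewrite xo yo xO yO.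
  + by have := E (a_otimes a (a_f A ord0)); rewrite xo yo xz yz.
  + by have := E (a_oplus a (a_t A ord0)); rewrite xp yp xO yO.
  + by have := E (a_oplus a (a_f A ord0)); rewrite xp yp xz yz.
  + by have := E (a_neg (a_oplus a (a_t A ord0))); rewrite xn yn xp yp xO yO.
  + by have := E (a_neg (a_oplus a (a_f A ord0))); rewrite xn yn xp yp xz yz.
  + by have := E (a_neg (a_otimes a (a_t A ord0))); rewrite xn yn xo yo xO yO.
  + by have := E (a_neg (a_otimes a (a_f A ord0))); rewrite xn yn xo yo xz yz.
Qed.
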